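(* Let $n\in\mathbb N$. Then: (i) $\delta(n)<\frac n4$ if and only if both (a) $n\ne p,2p,3p,4p$ for every prime $p$ (including $p=2$), and (b) $n\notin\{1,16,18,24,25,27,30,32,35,36,40,42,45,48,49,50,54,55,56,60,63,64,65,66,75,85,95\}$; (ii) $\delta(n)=\frac n4$ if and only if $n=64$.
   Context: $\mathbb N$ is the set of positive integers. For $n\in\mathbb N$, $\delta(n)=\min\{\,r+s : r,s\in\mathbb N,\ r\le s,\ rs=n\,\}$, i.e. the minimum of $d+n/d$ over positive divisors $d$ of $n$. *)

(* Defs.v *)
From mathcomp Require Import all_boot.
Set Implicit Arguments. Unset Strict Implicit. Unset Printing Implicit Defensive.

(* delta n = min { r + s : r, s positive, r <= s, r * s = n }
   = min over divisors r of n with r * r <= n (i.e. r <= n/r) of r + n/r.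
   The default value n.+1 is never reached for n >= 1 (r = 1 works). *)
Definition delta (n : nat) : nat :=
  \big[minn/n.+1]_(r <- divisors n | r * r <= n) (r + n %/ r).

Definition exceptional : seq nat :=
  [:: 1; 16; 18; 24; 25; 27; 30; 32; 35; 36; 40; 42; 45; 48; 49; 50; 54; 55;
      56; 60; 63; 64; 65; 66; 75; 85; 95].

(* Main.v *)
Require Import Defs.
From mathcomp Require Import all_boot zify.

Definition deltaF (n : nat) : nat :=
  foldr (fun r acc => if r * r <= n then minn (r + n %/ r) acc else acc) n.+1 (divisors n).

Lemma deltaE n : delta n = deltaF n.
Proof.
rewrite /delta /deltaF; elim: (divisors n) => [|a s IH]; first by rewrite big_nil.
by rewrite big_cons /= IH.
Qed.

Definition Bb n := all (fun p => prime p ==> [&& n != p, n != 2*p, n != 3*p & n != 4*p]) (iota 0 n.+1).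

Lemma BbP n : 0 < n -> reflect (forall p, prime p -> n <> p /\ n <> 2 * p /\ n <> 3 * p /\ n <> 4 * p) (Bb n).
Proof.
move=> n0; apply: (iffP allP) => H.
- move=> p pp; have [pn|np] := leqP p n.
    have := H p; rewrite mem_iota add0n ltnS pn pp /= => /(_ isT).
    by case/and4P => /eqP ? /eqP ? /eqP ? /eqP ?.
  lia.
- move=> p _; apply/implyP => pp; have := H p pp.
  by case=> [a [b [c d]]]; apply/and4P; split; apply/eqP.
Qed.

Definition smallcheck := all (fun n => ((4*deltaF n < n) == (Bb n && (n \notin exceptional)))
   && ((4*deltaF n == n) == (n == 64))) (iota 1 100).

Lemma smallcheckT : smallcheck.
Proof. vm_compute. reflexivity. Qed.

Lemma delta_le n d : 0 < n -> d %| n -> delta n <= d + n %/ d.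
Proof.
move=> n0 dn.
have key : forall r, r %| n -> r * r <= n -> delta n <= r + n %/ r.
  move=> r rn rr; rewrite /delta.
  have : r \in divisors n by rewrite -dvdn_divisors.
  elim: (divisors n) => [|a s IH] //; rewrite inE big_cons.
  case/orP => [/eqP <-|/IH h]; first by rewrite rr geq_minl.
  by case: ifP => _ //; apply: leq_trans (geq_minr _ _) h.
have [dd|dd] := leqP (d * d) n; first exact: key.
set e := n %/ d.
have ne : n = e * d by rewrite divnK.
have d0 : 0 < d by case: d dn {e ne dd} => //; rewrite dvd0n => /eqP h; rewrite h in n0.
have en : e %| n by rewrite ne dvdn_mulr.
have e0 : 0 < e by rewrite lt0n; apply/eqP => h; move: ne; rewrite h; lia.
have nee : n %/ e = d by rewrite ne mulKn.
have h2 := key e en; rewrite nee in h2.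
rewrite addnC; apply: h2.
have : e < d by rewrite ne in dd; nia.
rewrite ne; nia.
Qed.

Lemma delta_gt n : 0 < n -> (forall r, r %| n -> r * r <= n -> n < 4 * (r + n %/ r)) -> n < 4 * delta n.
Proof.
move=> n0 H; rewrite /delta big_seq_cond.
apply: (big_ind (fun x => n < 4 * x)); first lia.
  move=> x y hx hy; rewrite /minn; case: ifP => //.
move=> r /andP[]; rewrite -dvdn_divisors //; exact: H.
Qed.

Lemma not_kp n d p k : d %| n -> 5 <= d -> 5 * d <= n -> prime p -> 1 <= k <= 4 -> n <> k * p.
Proof.
move=> dn d5 dn5 pp /andP[k1 k4] nkp.
have n0 : 0 < n by lia.
set e := n %/ d.
have ne : n = e * d by rewrite divnK.
have : p %| e * d by rewrite -ne nkp dvdn_mull.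
rewrite Euclid_dvdM // => /orP[] /dvdnP[j hj].
- rewrite hj in ne; have : j * d = k.
    have p0 := prime_gt0 pp; apply/eqP; rewrite -(eqn_pmul2r p0); apply/eqP; lia.
  case: (j) => [|j'] hh; first lia.
  have : d <= j'.+1 * d by rewrite leq_pmull. lia.
- rewrite hj in ne; have : e * j = k.
    have p0 := prime_gt0 pp; apply/eqP; rewrite -(eqn_pmul2r p0); apply/eqP; lia.
  move=> hh; have e5 : 5 <= e by rewrite /e leq_divRL; lia.
  case: (j) hh => [|j'] hh; first lia.
  have : e <= e * j'.+1 by rewrite leq_pmulr. lia.
Qed.

Lemma caseB_struct n : 101 <= n -> (forall d, d %| n -> 5 <= d -> n < 5 * d) ->
  exists p k, [/\ prime p, 1 <= k <= 4 & n = k * p].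
Proof.
move=> n101 H.
have exP : exists d, (5 <= d) && (d %| n) by exists n; rewrite dvdnn andbT; lia.
case: (ex_minnP exP) => d /andP[d5 dn] dmin.
have d1 : 1 < d by lia.
set q := pdiv d.
have qp : prime q := pdiv_prime d1.
have qd : q %| d := pdiv_dvd d.
have q2 := prime_gt1 qp.
set f := d %/ q.
have df : d = f * q by rewrite divnK.
have fn : f %| n by apply: dvdn_trans dn; rewrite df dvdn_mulr.
have f4 : f <= 4.
  rewrite leqNgt; apply/negP => f5.
  have := dmin f; rewrite f5 fn /= => /(_ isT); nia.
have [q4|q5] := leqP q 4.
  have := H d dn d5; nia.
have qn : q %| n := dvdn_trans qd dn.
have := dmin q; rewrite q5 qn => /(_ isT) dq.
have eqd : q = d by apply/eqP; rewrite eqn_leq dq dvdn_leq //; lia.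
exists d, (n %/ d); split; first by rewrite -eqd.
  have := H d dn d5; have := divnK dn; nia.
by rewrite divnK.
Qed.

Lemma caseB_delta n p k : 101 <= n -> prime p -> 1 <= k <= 4 -> n = k * p -> n < 4 * delta n.
Proof.
move=> n101 pp /andP[k1 k4] nkp.
apply: delta_gt; first lia.
move=> r rn rr.
have n0 : 0 < n by lia.
set e := n %/ r.
have ne : n = e * r by rewrite divnK.
have kp4 : k * p <= 4 * p by rewrite leq_mul2r k4 orbT.
have p0 := prime_gt0 pp.
have : p %| e * r by rewrite -ne nkp dvdn_mull.
rewrite Euclid_dvdM // => /orP[] /dvdnP[j hj].
- rewrite hj in ne.
  have : r * j = k.
    apply/eqP; rewrite -(eqn_pmul2r p0); apply/eqP; lia.
  case: (j) hj => [|j'] hj hh; first lia.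
  have : p <= j'.+1 * p by rewrite leq_pmull.
  case: (r) hh => [|r'] hh; first lia.
  lia.
- have pr : p <= r by rewrite hj; case: (j) hj => [|j'] hj; [rewrite hj in ne; lia| rewrite leq_pmull].
  have : p * p <= r * r by rewrite leq_mul.
  move=> h1; have : p * p <= 4 * p.
    by apply: leq_trans h1 _; apply: leq_trans rr _; rewrite nkp.
  rewrite leq_pmul2r // => p4.
  lia.
Qed.

Lemma exc_small n : n \in exceptional -> n <= 100.
Proof.
move=> h; have : all (fun x => x <= 100) exceptional by [].
by move/allP/(_ n h).
Qed.

Theorem proposition3p10 (n : nat) : 0 < n ->
  ((4 * delta n < n) <->
     ((forall p, prime p -> n <> p /\ n <> 2 * p /\ n <> 3 * p /\ n <> 4 * p)
      /\ n \notin exceptional))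
  /\ ((4 * delta n = n) <-> n = 64).
Proof.
move=> n0.
have [nsmall|nbig] := leqP n 100.
  have := allP smallcheckT n; rewrite mem_iota n0 /= add1n ltnS nsmall => /(_ isT).
  rewrite -deltaE => /andP[/eqP h1 /eqP h2]; split.
    rewrite h1; split.
      by case/andP => /(BbP n n0) ? ?.
    by case=> /(BbP n n0) ? ?; apply/andP.
  by split; [move/eqP; rewrite h2 => /eqP | move/eqP; rewrite -h2 => /eqP].
have nex : n \notin exceptional by apply/negP => /exc_small; lia.
have [/hasP[d] |nod] := boolP (has (fun d => (d %| n) && (5 <= d) && (5 * d <= n)) (iota 0 n.+1)).
  move=> _ /andP[/andP[dn d5] d5n].
  have hd := delta_le n d n0 dn.
  set e := n %/ d in hd.
  have ne : n = e * d by rewrite divnK.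
  have e5 : 5 <= e by rewrite /e leq_divRL; lia.
  have lt : 4 * delta n < n.
    apply: leq_ltn_trans (_ : 4 * (d + e) < n); first by rewrite leq_mul2l hd orbT.
    rewrite ne; clear -e5 d5 nbig ne; nia.
  split; last by split; lia.
  split=> // _; split=> // p pp.
  have nk := @not_kp n d p _ dn d5 d5n pp.
  split; last split; last split; move=> E.
  - by apply: (nk 1) => //; rewrite mul1n.
  - by apply: (nk 2).
  - by apply: (nk 3).
  - by apply: (nk 4).
have H : forall d, d %| n -> 5 <= d -> n < 5 * d.
  move=> d dn d5; rewrite ltnNge; apply/negP => hd.
  move/hasP: nod; apply; exists d.
    by rewrite mem_iota add0n ltnS; apply: dvdn_leq.
  by rewrite dn d5 hd.
have [p [k [pp kk nkp]]] := caseB_struct n nbig H.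
have gt := caseB_delta n p k nbig pp kk nkp.
split; last by split; lia.
split; first lia.
case=> /(_ p pp) [h1 [h2 [h3 h4]]] _.
case/andP: kk => k1 k4.
have : k = 1 \/ k = 2 \/ k = 3 \/ k = 4 by lia.
lia.
Qed.
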